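(* Let $n\geq 2$ and $m\geq 2$ be integers with $mn$ even. Then the total resonance graphs $R_t(C(m-1,n))$ and $R_t(T(m,n))$ are bipartite. Consequently the flip graphs $\mathcal{T}(C(m,n))$ and $\mathcal{T}(T(m,n))$ of the quadriculated cylinder and torus are bipartite.
   Context: The $(m,n)$-quadriculated cylinder $C(m,n)$ is obtained from an $m\times n$ chessboard ($m$ rows each of $n$ unit squares) by identifying its left and right sides; the $(m,n)$-quadriculated torus $T(m,n)$ is obtained by further identifying top and bottom sides. As graphs, $C(k,n)$ denotes the graph formed by the grid points and unit segments of the quadriculated cylinder with $k$ rows of squares: it consists of $k+1$ cycles of length $n$ (a cycle of length $2$ being a pair of parallel edges), consecutive ones joined by a perfect matching of ''vertical'' edges; it is viewed as embedded in the sphere by capping both ends, so its faces are the $kn$ unit squares and two faces bounded by the two end cycles. $T(m,n)$ as a graph is the grid graph of the quadriculated torus (vertices the $mn$ grid points, edges the unit segments), cellularly embedded in the torus with faces the $mn$ unit squares. The inner dual of the region $C(m,n)$ is the graph $C(m-1,n)$ and the inner dual of $T(m,n)$ is $T(m,n)$. A domino is a union of two adjacent unit squares and a tiling is a set of dominoes with disjoint interiors covering the region; a flip removes two side-by-side parallel dominoes forming a $2\times 2$ block and replaces them by the other two dominoes covering the block. The flip graph $\mathcal{T}(R)$ has the tilings of $R$ as vertices, two being adjacent iff one is obtained from the other by a flip. For a graph $G$ embedded on a surface, the total resonance graph $R_t(G)$ has the perfect matchings of $G$ as vertices, two perfect matchings $M_1,M_2$ being adjacent iff $M_1\oplus M_2$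 is exactly the edge set of the boundary cycle of one face. *)

(* Defs.v *)
From mathcomp Require Import all_boot.
Set Implicit Arguments.
Unset Strict Implicit.
Unset Printing Implicit Defensive.

(* The embedding
   is recorded by a finite type of faces F and the boundary edge set of each
   face [bd : F -> {set E}]. *)

Definition incident (V E : finType) (ends : E -> V * V) (v : V) (e : E) : bool :=
  ((ends e).1 == v) || ((ends e).2 == v).

Definition perfect_matching (V E : finType) (ends : E -> V * V) (M : {set E}) : Prop :=
  forall v : V, #|[set e in M | incident ends v e]| = 1.

Definition total_res_adj (V E F : finType) (ends : E -> V * V) (bd : F -> {set E})
    (M1 M2 : {set E}) : Prop :=
  exists f : F, (M1 :\: M2) :|: (M2 :\: M1) = bd f.

Definition bipartite_on (T : Type) (P : T -> Prop) (adj : T -> T -> Prop) : Prop :=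
  exists c : T -> bool, forall x y, P x -> P y -> adj x y -> c x <> c y.

Definition Rt_bipartite (V E F : finType) (ends : E -> V * V) (bd : F -> {set E}) : Prop :=
  bipartite_on (perfect_matching ends) (total_res_adj ends bd).

(* vertices (i,j), 0 <= i <= k, j in Z_n;
   horizontal edge inl (i,j) : (i,j) -- (i,j+1 mod n);
   vertical edge   inr (i,j) : (i,j) -- (i+1,j), i < k.
   faces: inl (i,j) the unit square with corners (i,j),(i,j+1),(i+1,j),(i+1,j+1);
          inr false / inr true the two end faces bounded by the cycles i = 0, i = k. *)
Definition cylV (k n : nat) := ('I_k.+1 * 'I_n)%type.
Definition cylE (k n : nat) := (('I_k.+1 * 'I_n) + ('I_k * 'I_n))%type.
Definition cylF (k n : nat) := (('I_k * 'I_n) + bool)%type.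

Definition cyl_ends (k n : nat) (e : cylE k n) : cylV k n * cylV k n :=
  match e with
  | inl (i, j) => ((i, j), (i, ordS j))
  | inr (i, j) => ((inord i, j), (inord i.+1, j))
  end.

Definition cyl_bd (k n : nat) (f : cylF k n) : {set cylE k n} :=
  match f with
  | inl (i, j) =>
      [set inl (inord i, j); inl (inord i.+1, j); inr (i, j); inr (i, ordS j)]
  | inr false => [set inl (ord0, j) | j : 'I_n]
  | inr true => [set inl (ord_max, j) | j : 'I_n]
  end.

Definition torV (m n : nat) := ('I_m * 'I_n)%type.
Definition torE (m n : nat) := (('I_m * 'I_n) + ('I_m * 'I_n))%type.
Definition torF (m n : nat) := ('I_m * 'I_n)%type.

Definition tor_ends (m n : nat) (e : torE m n) : torV m n * torV m n :=
  match e with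
  | inl (i, j) => ((i, j), (i, ordS j))
  | inr (i, j) => ((i, j), (ordS i, j))
  end.

Definition tor_bd (m n : nat) (f : torF m n) : {set torE m n} :=
  let: (i, j) := f in
  [set inl (i, j); inl (ordS i, j); inr (i, j); inr (i, ordS j)].

(* unit squares are (i,j) : 'I_m * 'I_n (row i, column j). *)
Definition sq (m n : nat) := ('I_m * 'I_n)%type.

Definition cyl_sq_adj (m n : nat) (s t : sq m n) : bool :=
  ((s.1 == t.1) && ((t.2 == ordS s.2) || (s.2 == ordS t.2))) ||
  ((s.2 == t.2) && ((t.1.+1 == s.1 :> nat) || (s.1.+1 == t.1 :> nat))).

Definition tor_sq_adj (m n : nat) (s t : sq m n) : bool :=
  ((s.1 == t.1) && ((t.2 == ordS s.2) || (s.2 == ordS t.2))) ||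
  ((s.2 == t.2) && ((t.1 == ordS s.1) || (s.1 == ordS t.1))).

Definition domino (m n : nat) (adj : rel (sq m n)) (D : {set sq m n}) : bool :=
  [exists s, exists t, adj s t && (D == [set s; t])].

Definition tiling (m n : nat) (adj : rel (sq m n)) (T : {set {set sq m n}}) : Prop :=
  partition T [set: sq m n] /\ (forall D, D \in T -> domino adj D).

Definition hpair (m n : nat) (i i' : 'I_m) (j : 'I_n) : {set {set sq m n}} :=
  [set [set (i, j); (i, ordS j)]; [set (i', j); (i', ordS j)]].
Definition vpair (m n : nat) (i i' : 'I_m) (j : 'I_n) : {set {set sq m n}} :=
  [set [set (i, j); (i', j)]; [set (i, ordS j); (i', ordS j)]].

Definition flip_at (m n : nat) (i i' : 'I_m) (j : 'I_n) (T1 T2 : {set {set sq m n}}) : Prop :=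
  (hpair i i' j \subset T1 /\ T2 = (T1 :\: hpair i i' j) :|: vpair i i' j) \/
  (vpair i i' j \subset T1 /\ T2 = (T1 :\: vpair i i' j) :|: hpair i i' j).

Definition cyl_flip (m n : nat) (T1 T2 : {set {set sq m n}}) : Prop :=
  exists (i i' : 'I_m) (j : 'I_n), i.+1 = i' :> nat /\ flip_at i i' j T1 T2.

Definition tor_flip (m n : nat) (T1 T2 : {set {set sq m n}}) : Prop :=
  exists (i : 'I_m) (j : 'I_n), flip_at i (ordS i) j T1 T2.

Definition cyl_flip_bipartite (m n : nat) : Prop :=
  bipartite_on (tiling (@cyl_sq_adj m n)) (@cyl_flip m n).
Definition tor_flip_bipartite (m n : nat) : Prop :=
  bipartite_on (tiling (@tor_sq_adj m n)) (@tor_flip m n).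

(* Main.v *)
Require Import Defs.
From mathcomp Require Import all_boot zify.

Lemma symdiff_odd (T : finType) (A B W : {set T}) :
  odd #|((A :\: B) :|: (B :\: A)) :&: W| = odd #|A :&: W| (+) odd #|B :&: W|.
Proof.
have hA : #|A :&: W| = #|A :&: B :&: W| + #|(A :\: B) :&: W|.
  rewrite -(cardsID B (A :&: W)); congr (_ + _); apply: eq_card => x; rewrite !inE;
  by case: (x \in A); case: (x \in B); case: (x \in W).
have hB : #|B :&: W| = #|A :&: B :&: W| + #|(B :\: A) :&: W|.
  rewrite -(cardsID A (B :&: W)); congr (_ + _); apply: eq_card => x; rewrite !inE;
  by case: (x \in A); case: (x \in B); case: (x \in W).
have hD : #|((A :\: B) :|: (B :\: A)) :&: W| = #|(A :\: B) :&: W| + #|(B :\: A) :&: W|.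
  rewrite setIUl cardsU.
  have -> : (A :\: B) :&: W :&: ((B :\: A) :&: W) = set0.
    apply/setP=> x; rewrite !inE;
    by case: (x \in A); case: (x \in B); case: (x \in W).
  by rewrite cards0 subn0.
rewrite hA hB hD !oddD.
by case: (odd #|A :&: B :&: W|); case: (odd _); case: (odd _).
Qed.

Lemma Rt_par (V E F : finType) (ends : E -> V * V) (bd : F -> {set E}) (W : {set E}) :
  (forall f M1 M2, perfect_matching ends M1 -> perfect_matching ends M2 ->
     (M1 :\: M2) :|: (M2 :\: M1) = bd f -> odd #|bd f :&: W|) ->
  Rt_bipartite ends bd.
Proof.
move=> H; exists (fun M => odd #|M :&: W|) => M1 M2 p1 p2 [f hf].
have := H f M1 M2 p1 p2 hf; rewrite -hf symdiff_odd.
by case: (odd _); case: (odd _).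
Qed.

Lemma cards_disj (T : finType) (A B : {set T}) :
  A :&: B = set0 -> #|A :|: B| = #|A| + #|B|.
Proof. by move=> h; rewrite cardsU h cards0 subn0. Qed.

Lemma flip_core (T : finType) (T1 T2 H V W : {set {set T}}) :
  trivIset T1 -> H \subset T1 -> T2 = (T1 :\: H) :|: V ->
  (forall D, D \in V -> exists2 A, A \in H & exists2 s, s \in A & s \in D) ->
  odd (#|H :&: W| + #|V :&: W|) -> odd #|T1 :&: W| != odd #|T2 :&: W|.
Proof.
move=> /trivIsetP triv sHT ->  meet hodd.
have disj : forall D, D \in V -> D \in T1 -> D \in H.
  move=> D DV DT; apply/negPn/negP => DH.
  have [A AH [s sA sD]] := meet D DV.
  have AT : A \in T1 by apply: (subsetP sHT).
  have neq : A != D by apply/eqP => e; move: DH; by rewrite -e AH.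
  have := triv A D AT DT neq.
  by move/disjointFr/(_ sA); rewrite sD.
have e2 : #|((T1 :\: H) :|: V) :&: W| = #|(T1 :\: H) :&: W| + #|V :&: W|.
  rewrite setIUl cards_disj //. apply/eqP; rewrite -subset0; apply/subsetP => D; rewrite !inE.
  case DV: (D \in V); last by rewrite !andbF.
  case DT: (D \in T1); last by rewrite /= andbF.
  by rewrite (disj D DV DT).
have e1 : #|T1 :&: W| = #|H :&: W| + #|(T1 :\: H) :&: W|.
  rewrite -cards_disj.
    apply: eq_card => D; rewrite !inE.
    case DH: (D \in H) => /=; last by [].
    by rewrite orbF (subsetP sHT D DH).
  by apply/setP => D; rewrite !inE; case: (D \in H); rewrite ?andbF.
rewrite e1 e2 !oddD; move: hodd; rewrite oddD.
by case: (odd #|H :&: W|); case: (odd _); case: (odd _).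
Qed.

Lemma card_pair1 (T : finType) (a b : T) (W : {set T}) :
  (a \in W) (+) (b \in W) -> #|[set a; b] :&: W| = 1.
Proof.
move=> h; apply/eqP/cards1P.
case Ha: (a \in W); move: h; rewrite Ha /=.
  move=> /negbTE Hb; exists a; apply/setP => x; rewrite !inE.
  case: (eqVneq x a) => [->|_]; first by rewrite Ha.
  by case: (eqVneq x b) => [->|_]; rewrite ?Hb ?andbF.
move=> Hb; exists b; apply/setP => x; rewrite !inE.
case: (eqVneq x b) => [->|nb]; first by rewrite Hb orbT.
by case: (eqVneq x a) => [->|_]; rewrite ?Ha ?andbF.
Qed.

Lemma card_pair0 (T : finType) (a b : T) (W : {set T}) :
  a \notin W -> b \notin W -> #|[set a; b] :&: W| = 0.
Proof.
move=> /negbTE Ha /negbTE Hb; apply/eqP; rewrite cards_eq0; apply/eqP/setP => x; rewrite !inE.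
by case: (eqVneq x a) => [->|_]; [rewrite Ha andbF | case: (eqVneq x b) => [->|_]; rewrite ?Hb ?andbF].
Qed.

Lemma forall2 (T : finType) (x y : T) (P : pred T) :
  [forall s in [set x; y], P s] = P x && P y.
Proof.
apply/forall_inP/andP => [h | [hx hy] s]; first by split; apply: h; rewrite !inE eqxx ?orbT.
by rewrite !inE => /orP [] /eqP ->.
Qed.

Lemma flip_bip m n (adj : rel (sq m n)) (R : {set {set sq m n}} -> {set {set sq m n}} -> Prop)
  (W : {set {set sq m n}}) :
  (forall T1 T2, R T1 T2 -> exists i i' j,
      odd (#|hpair i i' j :&: W| + #|vpair i i' j :&: W|) /\ flip_at i i' j T1 T2) ->
  bipartite_on (tiling adj) R.
Proof.
move=> H; exists (fun T => odd #|T :&: W|) => T1 T2 [p1 _] _ /H [i [i' [j [hodd hf]]]].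
move: p1 => /and3P [_ triv _]; suff: odd #|T1 :&: W| != odd #|T2 :&: W| by move/eqP.
case: hf => [[sub e] | [sub e]].
  have h := (@flip_core _ T1 T2 _ _ W triv sub e). refine (h _ hodd) => D; rewrite !inE => /orP [] /eqP ->.
    exists [set (i, j); (i, ordS j)]; first by rewrite !inE eqxx.
    by exists (i, j); rewrite !inE eqxx.
  exists [set (i, j); (i, ordS j)]; first by rewrite !inE eqxx.
  by exists (i, ordS j); rewrite !inE eqxx ?orbT.
rewrite addnC in hodd.
have h := (@flip_core _ T1 T2 _ _ W triv sub e). refine (h _ hodd) => D; rewrite !inE => /orP [] /eqP ->.
  exists [set (i, j); (i', j)]; first by rewrite !inE eqxx.
  by exists (i, j); rewrite !inE eqxx.
exists [set (i, j); (i', j)]; first by rewrite !inE eqxx.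
by exists (i', j); rewrite !inE eqxx ?orbT.
Qed.

Definition Wrow m n : {set {set sq m n}} := [set D : {set sq m n} | [forall s in D, ~~ odd s.1]].
Definition Wcol m n : {set {set sq m n}} := [set D : {set sq m n} | [forall s in D, ~~ odd s.2]].

Lemma row_count m n (i i' : 'I_m) (j : 'I_n) : odd i' = ~~ odd i ->
  odd (#|hpair i i' j :&: Wrow m n| + #|vpair i i' j :&: Wrow m n|).
Proof.
move=> h; rewrite /hpair /vpair card_pair1 ?card_pair0 // /Wrow !inE !forall2 /= h;
by case: (odd i).
Qed.

Lemma col_count m n (i i' : 'I_m) (j : 'I_n) : odd (ordS j) = ~~ odd j ->
  odd (#|hpair i i' j :&: Wcol m n| + #|vpair i i' j :&: Wcol m n|).
Proof.
move=> h; rewrite /hpair /vpair card_pair0 ?card_pair1 // /Wcol !inE !forall2 /= h;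
by case: (odd j).
Qed.

Lemma ordS_odd n (j : 'I_n) : ~~ odd n -> odd (ordS j) = ~~ odd j.
Proof.
move=> hn; rewrite /ordS /=.
case: (ltnP j.+1 n) => h.
  by rewrite modn_small // oddS.
have e : j.+1 = n by have := ltn_ord j; lia.
by rewrite e modnn /= -oddS e (negbTE hn).
Qed.

Lemma cyl_flip_bip m n : cyl_flip_bipartite m n.
Proof.
apply: (@flip_bip _ _ _ _ (Wrow m n)) => T1 T2 [i [i' [j [e hf]]]].
by exists i, i', j; split => //; apply: row_count; rewrite -e oddS.
Qed.

Lemma tor_flip_bip m n : ~~ odd (m * n) -> tor_flip_bipartite m n.
Proof.
rewrite oddM negb_and => /orP [hm | hn].
  apply: (@flip_bip _ _ _ _ (Wrow m n)) => T1 T2 [i [j hf]].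
  by exists i, (ordS i), j; split => //; apply: row_count; apply: ordS_odd.
apply: (@flip_bip _ _ _ _ (Wcol m n)) => T1 T2 [i [j hf]].
by exists i, (ordS i), j; split => //; apply: col_count; apply: ordS_odd.
Qed.

Lemma cardU1W (T : finType) (X : {set T}) (a : T) (W : {set T}) :
  a \notin X -> #|(X :|: [set a]) :&: W| = #|X :&: W| + (a \in W).
Proof.
move=> aX; rewrite setIUl cards_disj.
  congr (_ + _); case aW: (a \in W).
    have -> : [set a] :&: W = [set a] by apply/setP => x; rewrite !inE; case: eqP => // ->.
    by rewrite cards1.
  have -> : [set a] :&: W = set0 by apply/setP => x; rewrite !inE; case: eqP => // ->; rewrite aW.
  by rewrite cards0.
apply/setP => x; rewrite !inE; case: eqP => [->|]; last by rewrite !andbF.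
by rewrite (negbTE aX).
Qed.

Lemma card1W (T : finType) (a : T) (W : {set T}) : #|[set a] :&: W| = (a \in W).
Proof.
have := @cardU1W T set0 a W; rewrite set0U set0I cards0 add0n; apply; by rewrite inE.
Qed.

Lemma card4 (T : finType) (a b c d : T) (W : {set T}) :
  b \notin [set a] -> c \notin [set a; b] -> d \notin [set a; b; c] ->
  #|[set a; b; c; d] :&: W| = (a \in W) + (b \in W) + (c \in W) + (d \in W).
Proof. by move=> hb hc hd; rewrite !cardU1W // card1W. Qed.

Lemma ordS_neq n (j : 'I_n) : 1 < n -> ordS j != j.
Proof.
move=> hn; apply/eqP => /(congr1 val) /=.
case: (ltnP j.+1 n) => h.
  by rewrite modn_small //; lia.
have e : j.+1 = n by have := ltn_ord j; lia.
rewrite e modnn; lia.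
Qed.

Lemma cap_imp k n (r : 'I_k.+1) (M1 M2 : {set cylE k n}) : 1 < n -> odd n ->
  perfect_matching (@cyl_ends k n) M1 -> perfect_matching (@cyl_ends k n) M2 ->
  (M1 :\: M2) :|: (M2 :\: M1) = [set inl (r, j) | j : 'I_n] -> False.
Proof.
move=> n1 no p1 p2 hD.
pose x := fun j : 'I_n => (inl (r, j) : cylE k n) \in M1.
have inD j : ((inl (r,j) : cylE k n) \in M1) != (inl (r,j) \in M2).
  have : (inl (r,j) : cylE k n) \in (M1:\:M2):|:(M2:\:M1).
    by rewrite hD; apply: (imset_f (fun j0 : 'I_n => (inl (r, j0) : cylE k n))).
  by rewrite !inE; case: (_ \in M1); case: (_ \in M2).
have alt j : x (ordS j) = ~~ x j.
  pose v : cylV k n := (r, ordS j).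
  have ne : (inl (r, j) : cylE k n) != inl (r, ordS j).
    apply/eqP => [[]] /eqP; by rewrite eq_sym (negbTE (@ordS_neq n j n1)).
  have i1 : incident (@cyl_ends k n) v (inl (r, j)) by rewrite /incident /= eqxx orbT.
  have i2 : incident (@cyl_ends k n) v (inl (r, ordS j)) by rewrite /incident /= eqxx.
  have two : forall M, perfect_matching (@cyl_ends k n) M ->
      (inl (r,j) : cylE k n) \in M -> (inl (r, ordS j) : cylE k n) \in M -> False.
    move=> M pM h1 h2.
    have : #|[set (inl (r,j) : cylE k n); inl (r, ordS j)]| <=
           #|[set e in M | incident (@cyl_ends k n) v e]|.
      apply: subset_leq_card; apply/subsetP => e; rewrite !inE => /orP [] /eqP ->;
      by rewrite ?h1 ?h2 ?i1 ?i2.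
    by rewrite pM cards2 ne.
  have d1 := inD j; have d2 := inD (ordS j).
  rewrite /x; case h1: (inl (r, ordS j) \in M1); case h2 : (inl (r, j) \in M1) => //=.
    by exfalso; exact: (two M1 p1 h2 h1).
  rewrite h1 h2 /= in d1 d2.
  have e1 : (inl (r,j) : cylE k n) \in M2 by move: d1; case: (_ \in M2).
  have e2 : (inl (r,ordS j) : cylE k n) \in M2 by move: d2; case: (_ \in M2).
  by exfalso; exact: (two M2 p2 e1 e2).
have : n = (\sum_(j < n) x j).*2.
  rewrite -addnn; transitivity (\sum_(j < n) (x j + x (ordS j))).
    rewrite (eq_bigr (fun _ => 1)); first by rewrite sum_nat_const card_ord muln1.
    by move=> j _; rewrite alt; case: (x j).
  rewrite big_split /=; congr (_ + _).
  symmetry; exact: (reindex_inj (@ordS_inj n)).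
by move=> e; move: no; rewrite e odd_double.
Qed.

Lemma inord_lo k (i : 'I_k) : ((inord i : 'I_k.+1) : nat) = i.
Proof. by rewrite inordK // ltnW // ltnS ltn_ord. Qed.
Lemma inord_hi k (i : 'I_k) : ((inord i.+1 : 'I_k.+1) : nat) = i.+1.
Proof. by rewrite inordK // ltnS ltn_ord. Qed.

Lemma cyl_Rt k n : 1 < n -> Rt_bipartite (@cyl_ends k n) (@cyl_bd k n).
Proof.
move=> n1; case no: (odd n).
  apply: (@Rt_par _ _ _ _ _ [set e : cylE k n | match e with inl p => ~~ odd p.1 | inr _ => false end])
    => f M1 M2 p1 p2 hf.
  case: f hf => [[i j] | []] hf.
  - rewrite /= card4 /=.
    + by rewrite !inE /= inord_lo inord_hi oddS; case: (odd i).
    + by rewrite !inE /=; apply/eqP => -[] /(congr1 (@nat_of_ord _)); rewrite inord_lo inord_hi; lia.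
    + by rewrite !inE.
    + by rewrite !inE /=; apply/eqP => -[] /eqP; rewrite (negbTE (@ordS_neq n j n1)).
  - by exfalso; exact: (cap_imp _ _ _ _ _ n1 no p1 p2 hf).
  - by exfalso; exact: (cap_imp _ _ _ _ _ n1 no p1 p2 hf).
have j0 : 0 < n by lia.
apply: (@Rt_par _ _ _ _ _ [set e : cylE k n | match e with inl p => (p.2 : nat) == 0 | inr p => ~~ odd p.2 end])
  => f M1 M2 p1 p2 hf.
have capW (r : 'I_k.+1) : #|[set (inl (r, j) : cylE k n) | j : 'I_n] :&:
     [set e : cylE k n | match e with inl p => (p.2 : nat) == 0 | inr p => ~~ odd p.2 end]| = 1.
  apply/eqP/cards1P; exists (inl (r, Ordinal j0)); apply/setP => e; rewrite !inE.
  apply/andP/eqP => [[/imsetP [j _ ->]] /= /eqP h0 | ->].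
    by do 2 f_equal; apply: val_inj.
  by split => //; apply: (imset_f (fun j : 'I_n => (inl (r, j) : cylE k n))).
case: f hf => [[i j] | []] hf /=.
- rewrite card4 /=.
  + rewrite !inE /= (@ordS_odd n j (negbT no)); case: (odd j); by case: (j : nat).
  + by rewrite !inE /=; apply/eqP => -[] /(congr1 (@nat_of_ord _)); rewrite inord_lo inord_hi; lia.
  + by rewrite !inE.
  + by rewrite !inE /=; apply/eqP => -[] /eqP; rewrite (negbTE (@ordS_neq n j n1)).
- by rewrite capW.
- by rewrite capW.
Qed.

Lemma tor_Rt m n : 1 < m -> 1 < n -> ~~ odd (m * n) -> Rt_bipartite (@tor_ends m n) (@tor_bd m n).
Proof.
move=> m1 n1; rewrite oddM negb_and => /orP [hm | hn].
  apply: (@Rt_par _ _ _ _ _ [set e : torE m n | match e with inl p => ~~ odd p.1 | inr _ => false end])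
    => [[i j]] M1 M2 p1 p2 hf /=.
  rewrite card4 /=.
  + by rewrite !inE /= (@ordS_odd m i hm); case: (odd i).
  + by rewrite !inE /=; apply/eqP => -[] /eqP; rewrite (negbTE (@ordS_neq m i m1)).
  + by rewrite !inE.
  + by rewrite !inE /=; apply/eqP => -[] /eqP; rewrite (negbTE (@ordS_neq n j n1)).
apply: (@Rt_par _ _ _ _ _ [set e : torE m n | match e with inl _ => false | inr p => ~~ odd p.2 end])
  => [[i j]] M1 M2 p1 p2 hf /=.
rewrite card4 /=.
+ by rewrite !inE /= (@ordS_odd n j hn); case: (odd j).
+ by rewrite !inE /=; apply/eqP => -[] /eqP; rewrite (negbTE (@ordS_neq m i m1)).
+ by rewrite !inE.
+ by rewrite !inE /=; apply/eqP => -[] /eqP; rewrite (negbTE (@ordS_neq n j n1)).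
Qed.

Theorem corollary2p7 (m n : nat) (hn : 2 <= n) (hm : 2 <= m) (hmn : ~~ odd (m * n)) :
  [/\ Rt_bipartite (@cyl_ends m.-1 n) (@cyl_bd m.-1 n),
      Rt_bipartite (@tor_ends m n) (@tor_bd m n),
      cyl_flip_bipartite m n &
      tor_flip_bipartite m n].
Proof.
split.
- exact: cyl_Rt.
- exact: tor_Rt.
- exact: cyl_flip_bip.
- exact: tor_flip_bip.
Qed.
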